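(* There exist two languages $L_1,L_2\subseteq\mathbb{N}$ and an enumeration $x_{1:\infty}$ that is, for each $K\in\{L_1,L_2\}$, an enumeration of $K$ with $o(1)$-noise and without omissions, such that for every $\rho>0$ no element-based generator can, with target $K$ an arbitrary member of the collection $\{L_1,L_2\}$, generate from $K$ in the limit on $x_{1:\infty}$ and achieve element-based upper density at least $\rho$ in $K$.
   Context: The universe is $U=\mathbb{N}$ with its natural order; a language is an infinite subset of $U$. For $A,B\subseteq\mathbb{N}$ with $B=\{b_1<b_2<\cdots\}$, $\mu_{\rm up}(A,B)=\limsup_n\frac1n|A\cap\{b_1,\dots,b_n\}|$. An enumeration of $L$ with $o(1)$-noise and without omissions is a sequence of distinct elements in which every element of $L$ appears and $\frac1n|\{t\le n:x_t\notin L\}|\to0$. An element-based generator outputs at step $n$, from $x_1,\dots,x_n$ (and knowledge of the collection, not of $K$), an element $w_n\notin\{x_1,\dots,x_n,w_1,\dots,w_{n-1}\}$; it generates in the limit from $K$ if $w_n\in K$ for all sufficiently large $n$, and achieves element-based upper density $\rho$ if $\mu_{\rm up}(\{w_1,w_2,\dots\},K)\ge\rho$. *)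

(* Defs.v *)
From HB Require Import structures.
From mathcomp Require Import all_boot all_order all_algebra.
From mathcomp Require Import all_classical all_reals all_analysis.
Set Implicit Arguments. Unset Strict Implicit. Unset Printing Implicit Defensive.
Import Order.TTheory GRing.Theory Num.Theory.
Import numFieldNormedType.Exports.
Local Open Scope classical_set_scope.
Local Open Scope ring_scope.

Definition language (L : set nat) : Prop := infinite_set L.

(* Least element of B that is >= m (default 0 if none). *)
Definition next_ge (B : set nat) (m : nat) : nat :=
  xget 0%N [set k | B k /\ (m <= k)%N /\ forall j, B j -> (m <= j)%N -> (k <= j)%N].

(* The increasing enumeration b_0 < b_1 < ... of B (0-indexed: b_{i+1} of
   the paper is [incr_enum B i]). *)
Fixpoint incr_enum (B : set nat) (i : nat) : nat :=
  match i with
  | 0 => next_ge B 0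
  | i'.+1 => next_ge B (incr_enum B i').+1
  end.

Definition count_first (A B : set nat) (n : nat) : nat :=
  count (fun i => `[< A (incr_enum B i) >]) (iota 0 n).

Definition mu_up (R : realType) (A B : set nat) : \bar R :=
  limn_esup (fun n => ((count_first A B n.+1)%:R / (n.+1)%:R : R)%:E).

(* x (0-indexed: x t is x_{t+1} of the paper) is an enumeration of L with
   o(1)-noise and without omissions. *)
Definition enum_noise_no_omission (R : realType) (L : set nat) (x : nat -> nat)
  : Prop :=
  injective x /\
  (forall k, L k -> exists t, x t = k) /\
  (fun n => ((count (fun t => `[< ~ L (x t) >]) (iota 0 n.+1))%:R
               / (n.+1)%:R : R)) @ \oo --> (0 : R).

(* An element-based generator: a map from the prefix [x_1,...,x_n] (n >= 1)
   to the output w_n, which must avoid the prefix and all earlier outputs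
   w_k = G [x_1,...,x_k], k < n. *)
Definition element_generator (G : seq nat -> nat) : Prop :=
  forall s : seq nat, (0 < size s)%N ->
    G s \notin s /\ (forall k, (0 < k < size s)%N -> G s != G (take k s)).

(* Output sequence of G on x: w n = G [x_0,...,x_n] (paper's w_{n+1}). *)
Definition gen_output (G : seq nat -> nat) (x : nat -> nat) (n : nat) : nat :=
  G (mkseq x n.+1).

Definition generates_in_limit (G : seq nat -> nat) (x : nat -> nat)
  (K : set nat) : Prop :=
  exists N, forall n, (N <= n)%N -> K (gen_output G x n).

Definition achieves_upper_density (R : realType) (G : seq nat -> nat)
  (x : nat -> nat) (K : set nat) (rho : R) : Prop :=
  (rho%:E <= mu_up R (range (gen_output G x)) K)%E.

(* Main.v *)
Require Import Defs.
From mathcomp Require Import all_boot all_order all_algebra.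
From mathcomp Require Import all_classical all_reals all_analysis.
From mathcomp Require Import zify ring lra.
From mathcomp Require finmap.
Import Order.TTheory GRing.Theory Num.Theory.
Import numFieldNormedType.Exports.
Local Open Scope classical_set_scope.

Set Implicit Arguments. Unset Strict Implicit.
Section NatPart.

Lemma unbounded_infinite (A : set nat) :
  (forall m, exists k, (m <= k)%N /\ A k) -> infinite_set A.
Proof.
move=> H /finite_fsetP [X eA].
have [k [Hk Ak]] := H (\max_(i <- finmap.enum_fset X) i).+1.
have kX : k \in finmap.enum_fset X by rewrite eA in Ak; exact: Ak.
have := @leq_bigmax_seq _ _ xpredT (fun i => i) _ kX isT.
by move=> h; move: Hk; rewrite ltnNge h.
Qed.

Variable B : set nat.
Hypothesis Bunb : forall m, exists k, (m <= k)%N /\ B k.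

Lemma next_ge_spec m : B (next_ge B m) /\ (m <= next_ge B m)%N /\
  forall j, B j -> (m <= j)%N -> (next_ge B m <= j)%N.
Proof.
rewrite /next_ge; apply: (@xgetPex _ 0%N [set k | B k /\ (m <= k)%N /\ forall j, B j -> (m <= j)%N -> (k <= j)%N]).
have ex : exists k, `[< B k >] && (m <= k)%N.
  by have [k [h1 h2]] := Bunb m; exists k; apply/andP; split => //; apply/asboolP.
case: (ex_minnP ex) => k /andP[/asboolP Bk mk] mn.
exists k; split => //; split => // j Bj mj; apply: mn.
by rewrite mj andbT; apply/asboolP.
Qed.

Lemma e_in i : B (incr_enum B i).
Proof. by case: i => [|i] /=; [case: (next_ge_spec 0)|case: (next_ge_spec (incr_enum B i).+1)]. Qed.

Lemma e_lt i : (incr_enum B i < incr_enum B i.+1)%N.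
Proof. by rewrite /=; case: (next_ge_spec (incr_enum B i).+1) => _ []. Qed.

Lemma e_mono {i j} : (i < j)%N -> (incr_enum B i < incr_enum B j)%N.
Proof.
elim: j => // j IH; rewrite ltnS leq_eqVlt => /orP[/eqP->|/IH h].
  exact: e_lt.
exact: ltn_trans h (e_lt j).
Qed.

Lemma e_inj : injective (incr_enum B).
Proof.
move=> i j eij; case: (ltngtP i j) => // h.
  by have := e_mono h; rewrite eij ltnn.
by have := e_mono h; rewrite eij ltnn.
Qed.

Lemma e_ge i : (i <= incr_enum B i)%N.
Proof.
elim: i => // i IH; exact: leq_ltn_trans IH (e_lt i).
Qed.

Lemma e_surj t : B t -> exists k, incr_enum B k = t.
Proof.
move=> Bt.
have step : forall i, (exists k, incr_enum B k = t) \/ (incr_enum B i <= t)%N.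
  elim=> [|i [E|IH]]; [right|by left|].
    by case: (next_ge_spec 0) => _ [_ h]; apply: h.
  case: (ltngtP (incr_enum B i) t) => h.
  - right; rewrite /=.
    by case: (next_ge_spec (incr_enum B i).+1) => _ [_ h2]; apply: h2.
  - by move: IH; rewrite leqNgt h.
  - by left; exists i.
case: (step t.+1) => // h.
by have := e_ge t.+1; rewrite leqNgt ltnS h.
Qed.

Definition inv_e t := xget 0%N [set k | incr_enum B k = t].

Lemma inv_eK t : B t -> incr_enum B (inv_e t) = t.
Proof. by move=> /e_surj ex; rewrite /inv_e; apply: (xgetPex 0%N ex). Qed.

Lemma e_invK k : inv_e (incr_enum B k) = k.
Proof. by apply: e_inj; rewrite inv_eK //; apply: e_in. Qed.

End NatPart.

Unset Implicit Arguments. Set Strict Implicit.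

Definition sq : set nat := [set t | exists k, t = k * k].
Definition nsq : set nat := ~` sq.

Lemma sq_unb m : exists k, (m <= k)%N /\ sq k.
Proof. exists (m * m); split; [nia | by exists m]. Qed.

Lemma not_sq1 k : (0 < k)%N -> ~ sq (k * k + 1).
Proof.
move=> k0 [j] e; case: (leqP j k) => h; nia.
Qed.

Lemma nsq_unb m : exists k, (m <= k)%N /\ nsq k.
Proof.
exists (m.+1 * m.+1 + 1); split; first nia.
exact: not_sq1.
Qed.

Lemma count_le_size (P : pred nat) n s :
  (forall i, (i < n)%N -> P i -> i \in s) -> (count P (iota 0 n) <= size s)%N.
Proof.
move=> H; rewrite -size_filter; apply: uniq_leq_size.
  by apply: filter_uniq; apply: iota_uniq.
by move=> i; rewrite mem_filter mem_iota /= add0n => /andP[Pi lt]; apply: H.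
Qed.

Lemma sqrt_ex n : exists m, (m * m <= n < m.+1 * m.+1)%N.
Proof.
elim: n => [|n [m /andP[h1 h2]]]; first by exists 0.
case: (ltnP n.+1 (m.+1 * m.+1)) => h.
  by exists m; apply/andP; split => //; apply: leqW.
exists m.+1; apply/andP; split => //. nia.
Qed.

Lemma nat_bound (a M m n : nat) : (0 < M)%N ->
  (((2 + a) * M + 1 + a) * M <= n)%N -> (m * m <= n)%N ->
  ((m + 1 + a) * M <= n)%N.
Proof.
move=> M0 hN hm.
case: (leqP ((2 + a) * M) m) => h.
  have : (m * ((2 + a) * M) <= m * m)%N by rewrite leq_mul2l h orbT.
  nia.
nia.
Qed.

Local Open Scope ring_scope.

Lemma sparse_cvg (R : realType) (c : nat -> nat) (a : nat) :
  (forall n m, (n < m * m)%N -> (c n <= m + a)%N) ->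
  (fun n => ((c n)%:R / n.+1%:R : R)) @ \oo --> (0 : R).
Proof.
move=> H; apply/cvgrPdist_lt => e e0.
pose M := (Num.truncn e^-1).+1.
have hM : e^-1 < M%:R := truncnS_gt _.
have M0 : (0 < M)%N by [].
exists (((2 + a) * M + 1 + a) * M)%N => // n /= hn.
have [m /andP[h1 h2]] := sqrt_ex n.
have hc := H n m.+1 h2.
have hb := @nat_bound a M m n M0 hn h1.
have hcM : (c n * M < n.+1)%N by nia.
have hcMR : (c n)%:R * M%:R < n.+1%:R :> R by rewrite -natrM ltr_nat.
have eM : 1 < e * M%:R.
  by move: hM; rewrite -(ltr_pM2l e0) mulfV ?gt_eqF.
rewrite sub0r normrN ger0_norm; last by apply: divr_ge0.
rewrite ltr_pdivrMr ?ltr0Sn //.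
have c0 : 0 <= (c n)%:R :> R by [].
have n0 : 0 < n.+1%:R :> R by rewrite ltr0Sn.
nra.
Qed.

Definition xx t := if `[< sq t >] then incr_enum nsq (inv_e sq t)
  else incr_enum sq (inv_e nsq t).

Lemma x_nsq t : ~ sq (xx t) -> sq t.
Proof.
rewrite /xx; case: asboolP => // _ h; exfalso; apply: h.
exact: (e_in sq_unb).
Qed.

Lemma x_inj : injective xx.
Proof.
move=> t1 t2; rewrite /xx; case: asboolP => h1; case: asboolP => h2 e.
- have e' := e_inj nsq_unb e.
  by rewrite -(inv_eK sq_unb h1) -(inv_eK sq_unb h2) e'.
- by exfalso; have h := e_in nsq_unb (inv_e sq t1); rewrite e in h; exact: h (e_in sq_unb _).
- by exfalso; have h := e_in nsq_unb (inv_e sq t2); rewrite -e in h; exact: h (e_in sq_unb _).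
- have e' := e_inj sq_unb e.
  by rewrite -(inv_eK nsq_unb h1) -(inv_eK nsq_unb h2) e'.
Qed.

Lemma x_surj k : exists t, xx t = k.
Proof.
case: (pselect (sq k)) => hk.
  exists (incr_enum nsq (inv_e sq k)); rewrite /xx; case: asboolP => h.
    by exfalso; apply: (e_in nsq_unb (inv_e sq k)).
  by rewrite e_invK ?inv_eK //; [exact: sq_unb|exact: nsq_unb].
exists (incr_enum sq (inv_e nsq k)); rewrite /xx; case: asboolP => h.
  by rewrite e_invK ?inv_eK //; [exact: nsq_unb|exact: sq_unb].
by exfalso; apply: h; apply: (e_in sq_unb).
Qed.

Lemma incr_T i : incr_enum setT i = i.
Proof.
have unb : forall m, exists k, (m <= k)%N /\ [set: nat] k by move=> m; exists m.
have nT m : next_ge setT m = m.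
  case: (next_ge_spec unb m) => _ [h1 h2].
  by apply/eqP; rewrite eqn_leq h1 andbT; apply: h2.
by elim: i => [|i IH] /=; rewrite nT ?IH.
Qed.

Lemma sq_mem n m i : (n < m * m)%N -> (i < n.+1)%N -> sq i ->
  i \in map (fun k => k * k)%N (iota 0 m).
Proof.
move=> h1 h2 [k ek]; subst i; apply/mapP; exists k => //.
rewrite mem_iota add0n /=.
case: (ltnP k m) => // h; exfalso.
have h3 : (m * m <= k * k)%N by apply: leq_mul.
move: h2; rewrite ltnS => h2.
by have := leq_ltn_trans (leq_trans h3 h2) h1; rewrite ltnn.
Qed.

Theorem theorem6p20 (R : realType) :
  exists L1 L2 : set nat,
    language L1 /\ language L2 /\ L1 <> L2 /\
    exists x : nat -> nat,
      enum_noise_no_omission R L1 x /\ enum_noise_no_omission R L2 x /\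
      forall rho : R, 0 < rho ->
        forall G : seq nat -> nat, element_generator G ->
          ~ (forall K : set nat, K = L1 \/ K = L2 ->
               generates_in_limit G x K /\ achieves_upper_density G x K rho).
Proof.
exists setT, sq; split.
  by apply: unbounded_infinite => m; exists m.
split; first exact: unbounded_infinite sq_unb.
split.
  move=> h; have : sq 2 by rewrite -h.
  by case=> j e; case: (leqP j 1) => hj; nia.
exists xx; split.
  split; first exact: x_inj.
  split; first by move=> k _; exact: x_surj.
  apply: (@sparse_cvg R (fun n => count (fun t => `[< ~ [set: nat] (xx t) >]) (iota 0 n.+1)) 0).
  move=> n m _; apply: leq_trans (count_le_size _ _ [::] _) _ => //.
  by move=> i _ /asboolP h; exfalso; exact: h I.
split.
  split; first exact: x_inj.
  split; first by move=> k _; exact: x_surj.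
  apply: (@sparse_cvg R (fun n => count (fun t => `[< ~ sq (xx t) >]) (iota 0 n.+1)) 0).
  move=> n m hnm.
  apply: leq_trans (count_le_size _ _ (map (fun k => k * k)%N (iota 0 m)) _) _.
    by move=> i hi /asboolP /x_nsq hs; apply: sq_mem hnm hi hs.
  by rewrite size_map size_iota addn0.
move=> rho rho0 G _ H.
have [_ dens] := H setT (or_introl erefl).
have [[N0 HN] _] := H sq (or_intror erefl).
pose w := gen_output G xx.
have cr : (fun n => ((count_first (range w) setT n.+1)%:R / n.+1%:R : R)) @ \oo --> (0 : R).
  apply: (@sparse_cvg R (fun n => count_first (range w) setT n.+1) N0).
  move=> n m hnm; rewrite /count_first.
  apply: leq_trans (count_le_size _ _
    (map (fun k => k * k)%N (iota 0 m) ++ map w (iota 0 N0)) _) _.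
    move=> i hi /asboolP; rewrite incr_T => -[j _ wj].
    rewrite mem_cat; apply/orP.
    case: (ltnP j N0) => hj.
      by right; apply/mapP; exists j => //; rewrite mem_iota.
    by left; apply: sq_mem hnm hi _; rewrite -wj; apply: HN.
  by rewrite size_cat !size_map !size_iota.
have ce : (fun n => ((count_first (range w) setT n.+1)%:R / n.+1%:R : R)%:E) @ \oo --> (0%:E : \bar R).
  apply: cvg_EFin; first by apply: nearW.
  exact: cr.
move: dens; rewrite /achieves_upper_density /mu_up.
rewrite is_cvg_limn_esupE; last by apply/cvg_ex; eexists; exact: ce.
rewrite (cvg_lim _ ce) // lee_fin.
by rewrite leNgt rho0.
Qed.
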